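(* Let $p$ be a prime, $n\geq 0$, $C_{p^n}$ cyclic of order $p^n$ with generator $c$, and for $i\ge0$ let $\zeta_{p^i}$ be a primitive $p^i$th root of unity. Consider the absolute Wedderburn embedding \[ \omega_{\mathbb{Z},p^n}\colon\mathbb{Z}C_{p^n}\to\prod_{i\in[0,n]}\mathbb{Z}[\zeta_{p^i}],\qquad c\mapsto(\zeta_{p^i})_{i\in[0,n]}. \] Every element of $\prod_{i\in[0,n]}\mathbb{Z}[\zeta_{p^i}]$ is uniquely of the form $\bigl(\sum_{j\in[0,\phi(p^i)-1]}x_{i,j}\zeta_{p^i}^j\bigr)_{i\in[0,n]}$ with $x_{i,j}\in\mathbb{Z}$. Such an element lies in the image of $\omega_{\mathbb{Z},p^n}$ if and only if for all $l\in[1,n]$ and all $j\in[0,\phi(p^{n-l})-1]$, \[ x_{n-l,j}\equiv\sum_{i\in[0,l-1]}p^{\,l-1-i}\sum_{k\in[1,p-1]}\Bigl(x_{n-i,\;j-p^{n-l}+kp^{n-1-i}}-(1-\delta_{l,n})\,x_{n-i,\;[j]_{p^{n-l-1}}-p^{n-l-1}+kp^{n-1-i}}\Bigr)\pmod{p^l}. \] Moreover, the elementary divisors of $\omega_{\mathbb{Z},p^n}$ over $\mathbb{Z}$ are $p^i$ with multiplicity $\phi(p^{n-i})$, for $i\in[0,n]$.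
   Context: $\phi$ is Euler's function; $\delta$ is the Kronecker delta; for $k\ge1$ and $j\in\mathbb{Z}$, $[j]_k\in[0,k-1]$ denotes the residue with $[j]_k\equiv j \pmod k$ (the term with $1-\delta_{l,n}$ is absent when $l=n$). All indices occurring in the congruence lie in the allowed ranges $[0,\phi(p^{n-i})-1]$. $[a,b]=\{x\in\mathbb{Z}:a\le x\le b\}$. *)

(* Defs.v *)
From mathcomp Require Import all_boot all_order all_algebra all_field.
Set Implicit Arguments. Unset Strict Implicit. Unset Printing Implicit Defensive.
Import Order.TTheory GRing.Theory Num.Theory.
Local Open Scope ring_scope.

(* The element (sum_{j < phi(p^i)} x_{i,j} z_i^j)_{i in [0,n]} of
   prod_i Z[zeta_{p^i}], realised inside algC, lies in the image of the
   Wedderburn map Z C_{p^n} -> prod_i Z[zeta_{p^i}], c |-> (z_i)_i :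
   it is the image of some sum_{k < p^n} a_k c^k. *)
Definition in_wedderburn_image (p n : nat) (z : nat -> algC)
    (x : nat -> nat -> int) : Prop :=
  exists a : nat -> int, forall i, (i <= n)%N ->
    \sum_(k < p ^ n) (a k)%:~R * z i ^+ k
    = \sum_(j < totient (p ^ i)) (x i j)%:~R * z i ^+ j.

Definition wedd_rhs (p n : nat) (x : nat -> nat -> int) (l j : nat) : int :=
  \sum_(i < l) (p ^ (l - 1 - i))%:Z *
    \sum_(1 <= k < p)
      (x (n - i)%N ((j + k * p ^ (n - 1 - i)) - p ^ (n - l))%N
       - (if l == n then 0
          else x (n - i)%N ((j %% p ^ (n - l - 1) + k * p ^ (n - 1 - i))
                            - p ^ (n - l - 1))%N)).

(* M : 'M[int]_(p^n) is the matrix of the Wedderburn map in the Z-bases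
   (c^k)_{k < p^n} of Z C_{p^n} and (z_i^j)_{i <= n, j < phi(p^i)} of the
   product, the rows being indexed via the bijection e onto the pairs (i,j). *)
Definition wedderburn_matrix (p n : nat) (z : nat -> algC)
    (e : 'I_(p ^ n) -> nat * nat) (M : 'M[int]_(p ^ n)) : Prop :=
  [/\ injective e,
      (forall r, ((e r).1 <= n)%N /\ ((e r).2 < totient (p ^ (e r).1))%N),
      (forall i j, (i <= n)%N -> (j < totient (p ^ i))%N ->
          exists r, e r = (i, j)) &
      (forall (i : nat) (k : 'I_(p ^ n)), (i <= n)%N ->
          z i ^+ k = \sum_(r | (e r).1 == i) (M r k)%:~R * z i ^+ (e r).2)].

Definition smith_diagonal (m : nat) (M : 'M[int]_m) (d : seq int) : Prop :=
  size d = m /\ sorted dvdz d /\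
  exists2 L : 'M[int]_m, L \in unitmx &
  exists2 R : 'M[int]_m, R \in unitmx &
    M = L *m (\matrix_(i, j) (d`_i *+ (i == j :> nat))) *m R.

Definition expected_divisors (p n : nat) : seq int :=
  flatten [seq nseq (totient (p ^ (n - i))) (p ^ i)%:Z | i <- iota 0 n.+1].

Arguments in_wedderburn_image : clear implicits.
Arguments wedd_rhs : clear implicits.
Arguments wedderburn_matrix : clear implicits.
Arguments expected_divisors : clear implicits.

(* Main.v *)
Require Import Defs.
From mathcomp Require Import all_boot all_order all_algebra all_field.
From mathcomp Require Import zify ring.
Import Order.TTheory GRing.Theory Num.Theory.
Local Open Scope ring_scope.

Lemma sum_split (V : nmodType) (Q P : nat) (f : nat -> V) :
  \sum_(k < Q * P) f k = \sum_(q < Q) \sum_(m < P) f (m + q * P)%N.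
Proof.
elim: Q => [|Q IH]; first by rewrite mul0n !big_ord0.
rewrite mulSnr big_split_ord /= IH big_ord_recr /=.
congr (_ + _); apply: eq_bigr => i _; by rewrite addnC.
Qed.

Lemma geom0 (w : algC) (Q : nat) : w ^+ Q = 1 -> w != 1 -> \sum_(q < Q) w ^+ q = 0.
Proof.
move=> h1 h2; have := subrX1 w Q; rewrite h1 subrr => /esym/eqP.
by rewrite mulf_eq0 subr_eq0 (negPf h2) /= => /eqP.
Qed.

Lemma prim_pow (p u s : nat) (z : algC) : prime p -> (p ^ u).-primitive_root z ->
  (z ^+ (p ^ s) == 1) = (u <= s)%N.
Proof.
move=> pp hz; rewrite -(prim_order_dvd hz) dvdn_Pexp2l //; exact: prime_gt1.
Qed.

Lemma geomP (p n u s : nat) (z : algC) : prime p -> (p ^ u).-primitive_root z ->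
  (u <= n)%N -> (s <= n)%N ->
  \sum_(q < p ^ (n - s)) z ^+ (q * p ^ s) = if (u <= s)%N then (p ^ (n - s))%:R else 0.
Proof.
move=> pp hz un sn.
have E : forall q, z ^+ (q * p ^ s) = (z ^+ (p ^ s)) ^+ q.
  by move=> q; rewrite mulnC exprM.
under eq_bigr do rewrite E.
case: ifP => us.
  have /eqP -> : z ^+ (p ^ s) == 1 by rewrite (prim_pow _ _ _ _ pp hz).
  by rewrite (eq_bigr (fun _ => 1)) ?sumr_const ?card_ord // => i _; rewrite expr1n.
apply: geom0; last by rewrite (prim_pow _ _ _ _ pp hz) us.
rewrite -exprM -expnD subnKC //.
by apply/eqP; rewrite (prim_pow _ _ _ _ pp hz).
Qed.
Lemma uniq_rep (N : nat) (z : algC) (c : nat -> int) : N.-primitive_root z ->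
  \sum_(j < totient N) (c j)%:~R * z ^+ j = 0 ->
  forall j, (j < totient N)%N -> c j = 0.
Proof.
move=> hz hs.
pose q : {poly rat} := \poly_(j < totient N) (c j)%:~R.
have hq : root (map_poly ratr q) z.
  have -> : map_poly ratr q = \poly_(j < totient N) ((c j)%:~R : algC).
    apply/polyP => i; rewrite coef_map !coef_poly; case: ifP => _.
      exact: (rmorph_int ratr).
    exact: (rmorph0 ratr).
  by rewrite /root horner_poly; apply/eqP.
case: (minCpolyP z) => p0 [Emin _] Hdiv.
have Hd : (p0 %| q)%R by rewrite -Hdiv.
have q0 : q = 0.
  apply/eqP; apply: contraTT Hd => qn0.
  apply/negP => /(dvdp_leq qn0).
  have -> : size p0 = (totient N).+1.
    by rewrite -(@size_map_poly _ algC ratr) -Emin (minCpoly_cyclotomic hz) size_cyclotomic.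
  have := size_poly (totient N) (fun j => (c j)%:~R : rat). rewrite -/q. move=> H1 H2. by have := leq_ltn_trans H1 H2; rewrite ltnn.
move=> j hj; have := congr1 (fun r : {poly rat} => r`_j) q0.
rewrite coef_poly hj coef0 => /eqP; rewrite intr_eq0 => /eqP //.
Qed.

Lemma uniq_rep2 (N : nat) (z : algC) (c c' : nat -> int) : N.-primitive_root z ->
  \sum_(j < totient N) (c j)%:~R * z ^+ j = \sum_(j < totient N) (c' j)%:~R * z ^+ j ->
  forall j, (j < totient N)%N -> c j = c' j.
Proof.
move=> hz hs j hj; apply/eqP; rewrite -subr_eq0; apply/eqP.
apply: (@uniq_rep N z (fun j => c j - c' j) hz) => //.
under eq_bigr do rewrite intrB mulrBl.
by rewrite sumrB hs subrr.
Qed.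

Lemma modD_mul (m q P : nat) : (m < P)%N -> ((m + q * P) %% P = m)%N.
Proof. by move=> h; rewrite addnC modnMDl modn_small. Qed.

Definition Af (p n : nat) (a : nat -> int) (u m : nat) : int :=
  \sum_(q < p ^ (n - u)) a (m + q * p ^ u)%N.

Definition cc (p n : nat) (a : nat -> int) (u j : nat) : int :=
  if u == 0%N then Af p n a 0 j
  else Af p n a u j - Af p n a u (p.-1 * p ^ u.-1 + j %% p ^ u.-1)%N.

Lemma fold_sum (p n : nat) (z : algC) (a : nat -> int) (u : nat) :
  (u <= n)%N -> z ^+ (p ^ u) = 1 ->
  \sum_(k < p ^ n) (a k)%:~R * z ^+ k = \sum_(m < p ^ u) (Af p n a u m)%:~R * z ^+ m.
Proof.
move=> un hz.
have E : (p ^ n = p ^ (n - u) * p ^ u)%N by rewrite -expnD subnK.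
rewrite E (sum_split _ _ _ (fun k => (a k)%:~R * z ^+ k)).
under [RHS]eq_bigr do rewrite /Af rmorph_sum mulr_suml.
rewrite exchange_big /=; apply: eq_bigr => q _; apply: eq_bigr => m _.
by rewrite exprD mulnC exprM hz expr1n mulr1.
Qed.

Lemma reduce (p n : nat) (z : algC) (a : nat -> int) (u : nat) : prime p ->
  (u <= n)%N -> (p ^ u).-primitive_root z ->
  \sum_(k < p ^ n) (a k)%:~R * z ^+ k = \sum_(j < totient (p ^ u)) (cc p n a u j)%:~R * z ^+ j.
Proof.
move=> pp un hz.
have hz1 : z ^+ (p ^ u) = 1 by apply/eqP; rewrite (prim_pow _ _ _ _ pp hz).
rewrite (fold_sum _ _ _ _ _ un hz1).
case: u un hz hz1 => [|v] un hz hz1.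
  by rewrite expn0 (_ : totient 1 = 1%N) // !big_ord1 /cc.
have p0 : (0 < p)%N by apply: prime_gt0.
set P := (p ^ v)%N.
have EP : (p ^ v.+1 = p.-1 * P + P)%N by rewrite expnS /P -{1}(prednK p0) mulSn addnC.
rewrite totient_pfactor //= -/P EP big_split_ord /=.
rewrite /cc /= -/P.
under [RHS]eq_bigr do rewrite intrB mulrBl.
rewrite sumrB; congr (_ + _).
have hw : \sum_(q < p.-1) z ^+ (q * P) = - z ^+ (p.-1 * P).
  have Hs := @geom0 (z ^+ P) p.
  rewrite -exprM -expnSr hz1 (prim_pow _ _ _ _ pp hz) ltnn in Hs.
  have {}Hs := Hs erefl isT.
  apply/eqP; rewrite -addr_eq0; apply/eqP.
  transitivity (\sum_(q < p) z ^+ P ^+ q); last exact Hs.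
  rewrite -(big_mkord xpredT (fun q => z ^+ P ^+ q)).
  have Ep : p = p.-1.+1 by rewrite prednK.
  rewrite [X in _ = \sum_(0 <= i < X) _]Ep big_nat_recr //= big_mkord.
  congr (_ + _); last by rewrite -exprM mulnC.
  by apply: eq_bigr => q _; rewrite -exprM mulnC.
rewrite (sum_split _ _ _ (fun j => ((Af p n a v.+1 (p.-1 * P + j %% P))%:~R * z ^+ j))).
rewrite exchange_big /= -sumrN; apply: eq_bigr => m _.

under eq_bigr do rewrite (modD_mul _ _ _ (ltn_ord m)) exprD mulrA.
by rewrite -mulr_sumr hw mulrN opprK exprD mulrA mulrAC.
Qed.

Lemma part1_lem (p i N : nat) (z : algC) (a : nat -> int) : prime p ->
  (p ^ i).-primitive_root z -> exists c : nat -> int,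
  \sum_(k < N) (a k)%:~R * z ^+ k = \sum_(j < totient (p ^ i)) (c j)%:~R * z ^+ j.
Proof.
move=> pp hz; pose n' := maxn i N.
pose a' k := if (k < N)%N then a k else 0.
exists (cc p n' a' i); rewrite -reduce ?leq_maxl //.
have HN : (N <= p ^ n')%N.
  apply: leq_trans (ltnW (ltn_expl N (prime_gt1 pp))) _.
  by apply: leq_pexp2l (prime_gt0 pp) (leq_maxr i N).
rewrite (big_ord_widen _ (fun k => (a k)%:~R * z ^+ k) HN) big_mkcond /=.
apply: eq_bigr => k _; rewrite /a'; case: ifP => _ //; by rewrite mul0r.
Qed.

Lemma modsum (p n s : nat) (z : algC) (g : nat -> int) : (s <= n)%N ->
  \sum_(k < p ^ n) (g (k %% p ^ s)%N)%:~R * z ^+ k =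
  (\sum_(m < p ^ s) (g m)%:~R * z ^+ m) * \sum_(q < p ^ (n - s)) z ^+ (q * p ^ s).
Proof.
move=> sn.
have E : (p ^ n = p ^ (n - s) * p ^ s)%N by rewrite -expnD subnK.
rewrite E (sum_split _ _ _ (fun k => (g (k %% p ^ s)%N)%:~R * z ^+ k)) mulr_sumr.
apply: eq_bigr => q _; rewrite mulr_suml; apply: eq_bigr => m _.
by rewrite modD_mul // exprD mulrA.
Qed.

Lemma Af_fold (p n : nat) (a : nat -> int) (v t : nat) : (v < n)%N ->
  Af p n a v t = \sum_(q < p) Af p n a v.+1 (t + q * p ^ v)%N.
Proof.
move=> vn; rewrite /Af.
have E : (p ^ (n - v) = p ^ (n - v.+1) * p)%N by rewrite -expnSr subnSK.
rewrite E (sum_split _ _ _ (fun q => a (t + q * p ^ v)%N)) exchange_big /=.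
apply: eq_bigr => q0 _; apply: eq_bigr => q1 _.
by rewrite mulnDl addnA expnS mulnA.
Qed.

Lemma sum_ord_pred (V : nmodType) (p : nat) (F : nat -> V) : (0 < p)%N ->
  \sum_(q < p) F q = \sum_(q < p.-1) F q + F p.-1.
Proof. by case: p => // p' _; rewrite big_ord_recr. Qed.

Lemma level_sum (p n : nat) (a : nat -> int) (u s0 j0 : nat) : prime p ->
  (0 < u)%N -> (u <= n)%N -> (s0 < u)%N -> (j0 < p ^ s0)%N ->
  \sum_(1 <= k < p) cc p n a u ((j0 + k * p ^ (u - 1)) - p ^ s0)%N =
  Af p n a (u - 1) (j0 + p ^ (u - 1) - p ^ s0)%N
  - (p%:Z) * Af p n a u (j0 + p ^ u - p ^ s0)%N.
Proof.
move=> pp; case: u => [//|v] _ un s0u hj0.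
rewrite subn1 /=.
have p0 : (0 < p)%N by apply: prime_gt0.
set P := (p ^ v)%N.
have hs : (p ^ s0 <= P)%N by apply: leq_pexp2l.
have EP : (p ^ v.+1 = p.-1 * P + P)%N by rewrite expnS /P -{1}(prednK p0) mulSn addnC.
set t := (j0 + P - p ^ s0)%N.
have ht : (t < P)%N by rewrite /t; lia.
rewrite big_add1 big_mkord.
have E1 : forall k : 'I_p.-1, ((j0 + k.+1 * P) - p ^ s0 = t + k * P)%N.
  by move=> k; rewrite mulSn /t; lia.
under eq_bigr => k _ do rewrite E1 /cc /= (modD_mul _ _ _ ht).
rewrite sumrB sumr_const card_ord (Af_fold p n a v t un).
have Ep : p = p.-1.+1 by rewrite prednK.
rewrite -/P (sum_ord_pred _ _ (fun q => Af p n a v.+1 (t + q * P)%N) p0).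
have E2 : (j0 + p ^ v.+1 - p ^ s0 = t + p.-1 * P)%N by rewrite EP /t; set X := (p.-1 * P)%N; lia.
rewrite E2 -mulr_natl natz [(t + _)%N]addnC.
have Ep' : (p%:Z) = (p.-1)%:Z + 1 by rewrite -PoszD addn1 prednK.
rewrite Ep'; ring.
Qed.

Lemma telescope (p l : nat) (f : nat -> int) :
  \sum_(i < l) (p ^ (l - 1 - i))%:Z * (f i.+1 - p%:Z * f i) = f l - (p ^ l)%:Z * f 0%N.
Proof.
elim: l => [|l IH]; first by rewrite big_ord0 expn0 mul1r subrr.
rewrite big_ord_recr /=.
have E : forall i : 'I_l, (l.+1 - 1 - i = (l - 1 - i).+1)%N.
  by move=> i; have := ltn_ord i; lia.
under eq_bigr => i _ do rewrite E expnS PoszM -mulrA.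
rewrite -mulr_sumr IH.
have -> : (l.+1 - 1 - l = 0)%N by lia.
rewrite expnS PoszM expn0; ring.
Qed.

Lemma wedd_cc (p n : nat) (a : nat -> int) (l j : nat) : prime p ->
  (1 <= l <= n)%N -> (j < totient (p ^ (n - l)))%N ->
  exists y : int, wedd_rhs p n (cc p n a) l j = cc p n a (n - l) j - (p ^ l)%:Z * y.
Proof.
move=> pp /andP [l1 ln] hj.
have p0 : (0 < p)%N by apply: prime_gt0.
have hj' : (j < p ^ (n - l))%N.
  apply: leq_trans hj _; case E: (n - l)%N => [|s]; first by rewrite expn0.
  by rewrite totient_pfactor // expnS /=; apply: leq_mul => //; apply: leq_pred.
pose f i := Af p n a (n - i) (j + p ^ (n - i) - p ^ (n - l))%N.
pose g i := if l == n then 0 else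
   Af p n a (n - i) (j %% p ^ (n - l - 1) + p ^ (n - i) - p ^ (n - l - 1))%N.
pose h i := f i - g i.
have key : forall i : 'I_l,
  \sum_(1 <= k < p)
      (cc p n a (n - i)%N ((j + k * p ^ (n - 1 - i)) - p ^ (n - l))%N
       - (if l == n then 0
          else cc p n a (n - i)%N ((j %% p ^ (n - l - 1) + k * p ^ (n - 1 - i))
                            - p ^ (n - l - 1))%N))
  = h i.+1 - p%:Z * h i.
  move=> i; have il := ltn_ord i.
  have -> : (n - 1 - i = n - i - 1)%N by lia.
  have E1 : (n - i - 1 = n - i.+1)%N by lia.
  rewrite /h /f /g; case: eqP => Hl.
    under eq_bigr do rewrite subr0.
    rewrite level_sum //; try lia.
    by rewrite E1 !subr0.
  rewrite sumrB !level_sum //; try lia.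
    by rewrite E1; ring.
rewrite /wedd_rhs.
under eq_bigr => i _ do rewrite key.
rewrite telescope; exists (h 0%N).
congr (_ - _); rewrite /h /f /g /cc.
have -> : (j + p ^ (n - l) - p ^ (n - l) = j)%N by lia.
case: eqP => Hl.
  by rewrite Hl subnn eqxx subr0.
have -> : (n - l == 0)%N = false by apply/negbTE; lia.
congr (_ - Af p n a _ _).
have -> : (n - l - 1 = (n - l).-1)%N by lia.
case E: (n - l)%N => [|s]; first lia.
rewrite /= expnS.
have Hp : (p * p ^ s = p.-1 * p ^ s + p ^ s)%N by rewrite -{1}(prednK p0) mulSn addnC.
rewrite Hp; set X := (p.-1 * p ^ s)%N; set Y := (p ^ s)%N; lia.
Qed.

Lemma tot_le (p s : nat) : prime p -> (totient (p ^ s) <= p ^ s)%N.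
Proof.
move=> pp; case: s => [|s]; first by rewrite expn0.
by rewrite totient_pfactor // expnS /=; apply: leq_mul => //; apply: leq_pred.
Qed.

Lemma idx_range (p u s0 j0 k : nat) : prime p -> (s0 < u)%N -> (j0 < p ^ s0)%N ->
  (1 <= k < p)%N -> ((j0 + k * p ^ (u - 1)) - p ^ s0 < totient (p ^ u))%N.
Proof.
move=> pp; case: u => [//|v] hs hj /andP [k1 kp].
rewrite totient_pfactor //= subn1 /=.
have p0 : (0 < p)%N by apply: prime_gt0.
have H0 : (0 < p ^ v)%N by rewrite expn_gt0 p0.
have H1 : (p ^ v <= k * p ^ v)%N by rewrite leq_pmull.
have H2 : (k * p ^ v <= p.-1 * p ^ v)%N by apply: leq_mul => //; rewrite -ltnS prednK.
have H3 : (p ^ s0 <= p ^ v)%N by apply: leq_pexp2l.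
set X := (k * p ^ v)%N in H1 H2 *; set Y := (p.-1 * p ^ v)%N in H2 *; lia.
Qed.

Lemma wedd_ext (p n : nat) (x y : nat -> nat -> int) (l j : nat) : prime p ->
  (1 <= l <= n)%N -> (j < totient (p ^ (n - l)))%N ->
  (forall u m, (n - l < u <= n)%N -> (m < totient (p ^ u))%N -> x u m = y u m) ->
  wedd_rhs p n x l j = wedd_rhs p n y l j.
Proof.
move=> pp /andP [l1 ln] hj H.
have p0 : (0 < p)%N by apply: prime_gt0.
have hj' : (j < p ^ (n - l))%N by apply: leq_trans hj (tot_le _ _ pp).
rewrite /wedd_rhs; apply: eq_bigr => i _; have il := ltn_ord i.
congr (_ * _); apply: eq_big_nat => k hk.
have E : (n - 1 - i = n - i - 1)%N by lia.
rewrite E; congr (_ - _).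
  apply: H; first lia.
  by apply: idx_range => //; lia.
case: eqP => // Hl; apply: H; first lia.
apply: idx_range => //; first lia.
by rewrite ltn_pmod // expn_gt0 p0.
Qed.

Lemma part3 (p n : nat) (z : nat -> algC) : prime p ->
  (forall i, (p ^ i).-primitive_root (z i)) ->
  forall x : nat -> nat -> int,
      in_wedderburn_image p n z x <->
      (forall l j, (1 <= l <= n)%N -> (j < totient (p ^ (n - l)))%N ->
         (x (n - l)%N j = wedd_rhs p n x l j %[mod (p ^ l)%:Z])%Z).
Proof.
move=> pp hz x; split.
  case=> a Ha l j hl hj.
  have Hx : forall u m, (u <= n)%N -> (m < totient (p ^ u))%N -> x u m = cc p n a u m.
    move=> u m un hm.
    apply: (@uniq_rep2 _ (z u) (x u) (cc p n a u) (hz u)) => //.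
    by rewrite -(Ha u un); exact: (reduce p n (z u) a u pp un (hz u)).
  rewrite (Hx _ _ (leq_subr _ _) hj).
  rewrite (@wedd_ext p n x (cc p n a) l j pp hl hj); last first.
    by move=> u m /andP [_ un] hm; exact: Hx.
  have [y ->] := wedd_cc _ _ a _ _ pp hl hj.
  have -> : cc p n a (n - l) j - (p ^ l)%:Z * y = (- y) * (p ^ l)%:Z + cc p n a (n - l) j by ring.
  by rewrite modzMDl.
move=> HC.
suff H : forall m, (m <= n.+1)%N -> exists a : nat -> int, forall u, (n.+1 - m <= u <= n)%N ->
    \sum_(k < p ^ n) (a k)%:~R * z u ^+ k = \sum_(j < totient (p ^ u)) (x u j)%:~R * z u ^+ j.
  have [a Ha] := H n.+1 (leqnn _).
  by exists a => i hi; apply: Ha; rewrite subnn hi.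
elim=> [|m IH] hm.
  by exists (fun _ => 0) => u /andP [h1 h2]; exfalso; lia.
have [a Ha] := IH (ltnW hm).
set s := (n - m)%N.
have sn : (s <= n)%N by rewrite /s; lia.
have Hx : forall u j, (s < u <= n)%N -> (j < totient (p ^ u))%N -> x u j = cc p n a u j.
  move=> u j /andP [h1 h2] hj.
  apply: (@uniq_rep2 _ (z u) (x u) (cc p n a u) (hz u)) => //.
  have h3 : (n.+1 - m <= u <= n)%N by rewrite /s in h1; lia.
  by rewrite -(Ha u h3); exact: (reduce p n (z u) a u pp h2 (hz u)).
have HD : forall j, (j < totient (p ^ s))%N ->
    ((p ^ (n - s))%:Z %| x s j - cc p n a s j)%Z.
  move=> j hj; have E : (n - s = m)%N by rewrite /s; lia.
  rewrite E; case: (posnP m) => [m0 | mpos].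
    by rewrite m0 expn0 dvd1z.
  have hl : (1 <= m <= n)%N by lia.
  have Hc := HC m j hl hj.
  rewrite (@wedd_ext p n x (cc p n a) m j pp hl hj) in Hc; last first.
    by move=> u m0 hu hm0; apply: Hx.
  have [y Ey] := wedd_cc _ _ a _ _ pp hl hj.
  rewrite Ey in Hc.
  rewrite -eqz_mod_dvd; apply/eqP; rewrite Hc.
  have -> : cc p n a (n - m) j - (p ^ m)%:Z * y = (- y) * (p ^ m)%:Z + cc p n a (n - m) j by ring.
  by rewrite modzMDl.
pose w j := ((x s j - cc p n a s j) %/ (p ^ (n - s))%:Z)%Z.
pose g m0 := if (m0 < totient (p ^ s))%N then w m0 else 0.
exists (fun k => a k + g (k %% p ^ s)%N) => u /andP [h1 h2].
under eq_bigr do rewrite intrD mulrDl.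
rewrite big_split /= (modsum _ _ _ _ _ sn) (geomP _ _ _ _ _ pp (hz u) h2 sn).
case: leqP => us.
  have Eu : u = s by rewrite /s in h1 us *; lia.
  rewrite Eu (reduce p n (z s) a s pp sn (hz s)).
  have -> : \sum_(m0 < p ^ s) (g m0)%:~R * z s ^+ m0 =
            \sum_(m0 < totient (p ^ s)) (w m0)%:~R * z s ^+ m0.
    rewrite (big_ord_widen _ (fun m0 => (w m0)%:~R * z s ^+ m0) (tot_le _ _ pp)).
    rewrite [RHS]big_mkcond; apply: eq_bigr => m0 _; rewrite /g; case: ifP => _ //; by rewrite mul0r.
  rewrite mulr_suml -big_split /=; apply: eq_bigr => j _.
  have Ew : (w j)%:~R * ((p ^ (n - s))%:R : algC) = (x s j - cc p n a s j)%:~R.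
    by rewrite -(divzK (HD j (ltn_ord j))) intrM.
  by rewrite mulrAC Ew intrB mulrBl addrC subrK.
rewrite mulr0 addr0; apply: Ha; rewrite /s in us; lia.
Qed.

Definition lev (p n r : nat) : nat := up_log p (p ^ n - r).
Definition jdx (p n r : nat) : nat := (r - (p ^ n - p ^ lev p n r))%N.

Lemma predP_mul (p v : nat) : (0 < p)%N -> (p ^ v.+1 = p.-1 * p ^ v + p ^ v)%N.
Proof. by move=> p0; rewrite expnS -{1}(prednK p0) mulSn addnC. Qed.

Lemma lev_spec (p n r : nat) : prime p -> (r < p ^ n)%N ->
  [/\ (lev p n r <= n)%N, (p ^ n - p ^ lev p n r <= r)%N &
      (jdx p n r < totient (p ^ lev p n r))%N].
Proof.
move=> pp rn; have p1 := prime_gt1 pp; have p0 := prime_gt0 pp.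
rewrite /jdx /lev; set m := (p ^ n - r)%N.
have m1 : (0 < m)%N by rewrite /m; lia.
have mle : (m <= p ^ n)%N by rewrite /m; lia.
have h1 := up_logP m p1.
have h2 := up_log_min p1 mle.
split => //; first by rewrite /m in h1 *; lia.
move: h1 h2; case E: (up_log p m) => [|v] h1 h2.
  rewrite expn0 (_ : totient 1 = 1%N) //; rewrite expn0 in h1; rewrite /m in h1 *; lia.
have mg : (1 < m)%N.
  case: (ltnP 1 m) => // hm; have : m = 1%N by lia.
  by move=> m1'; rewrite m1' up_log1 in E.
have h3 := up_log_gtn p1 mg; rewrite E /= in h3.
rewrite totient_pfactor //= (predP_mul p v p0) in h1 *.
set X := (p.-1 * p ^ v)%N in h1 *; rewrite /m in h1 h3 *; lia.
Qed.

Lemma lev_inv (p n i j : nat) : prime p -> (i <= n)%N -> (j < totient (p ^ i))%N ->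
  lev p n (p ^ n - p ^ i + j) = i /\ jdx p n (p ^ n - p ^ i + j) = j.
Proof.
move=> pp ih hj; have p1 := prime_gt1 pp; have p0 := prime_gt0 pp.
have hin : (p ^ i <= p ^ n)%N by apply: leq_pexp2l.
have hj' : (j < p ^ i)%N by apply: leq_trans hj (tot_le _ _ pp).
have L : lev p n (p ^ n - p ^ i + j) = i.
  rewrite /lev (_ : (p ^ n - (p ^ n - p ^ i + j) = p ^ i - j)%N); last by lia.
  case: i ih hj hin hj' => [|v] ih hj hin hj'.
    by rewrite expn0 in hj' *; rewrite (_ : (1 - j = 1)%N) ?up_log1 //; lia.
  apply: up_log_eq => //.
  rewrite totient_pfactor //= in hj; rewrite (predP_mul p v p0) in hin hj' *.
  set X := (p.-1 * p ^ v)%N in hj hin hj' *; apply/andP; split; lia.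
split => //; rewrite /jdx L; lia.
Qed.

Lemma lev_mono (p n r r' : nat) : (r <= r')%N -> (lev p n r' <= lev p n r)%N.
Proof. move=> h; apply: leq_up_log; lia. Qed.

Definition dl (k : nat) : nat -> int := fun t => if t == k then 1 else 0.

Lemma sum_delta (K k : nat) (z : algC) : (k < K)%N ->
  \sum_(t < K) (dl k t)%:~R * z ^+ t = z ^+ k.
Proof.
move=> hk; rewrite (bigD1 (Ordinal hk)) //= big1 ?addr0.
  by rewrite /dl eqxx mul1r.
by move=> t ht; rewrite /dl; case: eqP => [E|_]; [ case/eqP: ht; apply: val_inj | rewrite mul0r].
Qed.

Lemma cc_delta (p n : nat) (z : nat -> algC) (t j j' : nat) : prime p ->
  (forall i, (p ^ i).-primitive_root (z i)) -> (t <= n)%N ->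
  (j < totient (p ^ t))%N -> (j' < totient (p ^ t))%N -> cc p n (dl j') t j = dl j' j.
Proof.
move=> pp hz tn hj hj'.
apply: (@uniq_rep2 _ (z t) (cc p n (dl j') t) (dl j') (hz t)) => //.
rewrite -(reduce p n (z t) (dl j') t pp tn (hz t)) !sum_delta //.
apply: leq_trans hj' _; apply: leq_trans (tot_le _ _ pp) _; exact: leq_pexp2l (prime_gt0 pp) tn.
Qed.

Lemma sum_V (p n : nat) (z : nat -> algC) (t i' j' : nat) : prime p ->
  (forall i, (p ^ i).-primitive_root (z i)) -> (t <= n)%N -> (i' <= n)%N -> (j' < p ^ i')%N ->
  \sum_(k < p ^ n) (dl j' (k %% p ^ i')%N)%:~R * z t ^+ k =
  z t ^+ j' * (if (t <= i')%N then (p ^ (n - i'))%:R else 0).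
Proof.
move=> pp hz tn iN hj.
by rewrite (modsum _ _ _ _ _ iN) sum_delta // (geomP _ _ _ _ _ pp (hz t) tn iN).
Qed.

Lemma map_cst (T U : Type) (c : U) (s : seq T) : map (fun _ => c) s = nseq (size s) c.
Proof. by elim: s => //= x s ->. Qed.

Lemma exp_div_aux (p n m : nat) : prime p -> (m <= n.+1)%N ->
  flatten [seq nseq (totient (p ^ (n - i))) (p ^ i)%:Z | i <- iota 0 m] =
  mkseq (fun r => (p ^ (n - lev p n r))%:Z) (p ^ n - (if (m <= n)%N then p ^ (n - m) else 0))%N.
Proof.
move=> pp; have p0 := prime_gt0 pp.
elim: m => [|m IH] hm; first by rewrite /= subn0 subnn.
rewrite -addn1 iotaD map_cat flatten_cat IH; last by lia.
rewrite add0n /= cats0.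
have hmn : (m <= n)%N by lia.
rewrite hmn.
have ES : (p ^ n - (if (m + 1 <= n)%N then p ^ (n - (m + 1)) else 0) =
          (p ^ n - p ^ (n - m)) + totient (p ^ (n - m)))%N.
  have hpn : (p ^ (n - m) <= p ^ n)%N by apply: leq_pexp2l => //; lia.
  case: ifP => h.
    have E' : (n - m = (n - (m + 1)).+1)%N by lia.
    rewrite E' totient_pfactor //= (predP_mul p _ p0).
    rewrite E' (predP_mul p _ p0) in hpn.
    set X := (p.-1 * _)%N in hpn *; lia.
  have -> : (n - m = 0)%N by lia.
  rewrite expn0 (_ : totient 1 = 1%N) //.
  have : (0 < p ^ n)%N by rewrite expn_gt0 p0.
  lia.
rewrite ES /mkseq iotaD map_cat add0n; congr (_ ++ _).
rewrite (@eq_in_map _ _ _ (fun _ => (p ^ m)%:Z) _).1; first by rewrite map_cst size_iota.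
move=> r; rewrite mem_iota => /andP [h1 h2].
have E : r = (p ^ n - p ^ (n - m) + (r - (p ^ n - p ^ (n - m))))%N by lia.
have hr : (r - (p ^ n - p ^ (n - m)) < totient (p ^ (n - m)))%N by lia.
rewrite E; have [-> _] := @lev_inv p n (n - m) _ pp (leq_subr m n) hr.
by rewrite subKn.
Qed.

Lemma exp_div_eq (p n : nat) : prime p ->
  expected_divisors p n = mkseq (fun r => (p ^ (n - lev p n r))%:Z) (p ^ n).
Proof.
move=> pp; rewrite /expected_divisors exp_div_aux //.
by rewrite ltnn subn0.
Qed.

Lemma sum_lev (V : nmodType) (p n i : nat) (F : nat -> V) : prime p -> (i <= n)%N ->
  \sum_(r < p ^ n | lev p n r == i) F (jdx p n r) = \sum_(j < totient (p ^ i)) F j.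
Proof.
move=> pp hi; have p0 := prime_gt0 pp.
set off := (p ^ n - p ^ i)%N; set T := totient (p ^ i).
have hPi : (p ^ i <= p ^ n)%N by apply: leq_pexp2l.
have hT' : (T <= p ^ i)%N by apply: tot_le.
have hT : (off + T <= p ^ n)%N by rewrite /off; lia.
rewrite -(big_mkord (fun r => lev p n r == i) (fun r => F (jdx p n r))).
rewrite (@big_cat_nat _ _ _ off) ?leq0n //; last by lia.
rewrite (@big_cat_nat _ _ _ (off + T) off) ?leq_addr //=.
rewrite [X in X + _]big_nat_cond [X in _ + (_ + X)]big_nat_cond.
rewrite big1; last first.
  move=> r /andP [/andP [_ hr] /eqP hl].
  have hrn : (r < p ^ n)%N by rewrite /off in hr; lia.
  have [_ h2 _] := lev_spec _ _ _ pp hrn.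
  exfalso; rewrite hl /off in h2 hr; lia.
rewrite add0r [X in _ + X]big1 ?addr0; last first.
  move=> r /andP [/andP [hr1 hr2] /eqP hl].
  have [_ h2 h3] := lev_spec _ _ _ pp hr2.
  exfalso; rewrite /jdx hl /off /T in h2 h3 hr1; lia.
rewrite -{1}[off]add0n big_addn addKn big_mkord.
apply: eq_big => [j | j _].
  have [L _] := lev_inv _ _ _ _ pp hi (ltn_ord j).
  by rewrite addnC L eqxx.
have [_ J] := lev_inv _ _ _ _ pp hi (ltn_ord j).
by rewrite addnC J.
Qed.

Lemma jdx_inj (p n r1 r2 : nat) : prime p -> (r1 < p ^ n)%N -> (r2 < p ^ n)%N ->
  lev p n r1 = lev p n r2 -> jdx p n r1 = jdx p n r2 -> r1 = r2.
Proof.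
move=> pp h1 h2 E1; have [_ g1 _] := lev_spec _ _ _ pp h1; have [_ g2 _] := lev_spec _ _ _ pp h2.
rewrite /jdx E1; rewrite E1 in g1; set X := (p ^ n - _)%N in g1 g2 *; lia.
Qed.

Lemma part4 (p n : nat) (z : nat -> algC) : prime p ->
  (forall i, (p ^ i).-primitive_root (z i)) ->
  (exists (e : 'I_(p ^ n) -> nat * nat) (M : 'M[int]_(p ^ n)) (d : seq int),
      [/\ wedderburn_matrix p n z e M, smith_diagonal M d &
          perm_eq d (expected_divisors p n)]).
Proof.
move=> pp hz; have p0 := prime_gt0 pp; have p1 := prime_gt1 pp.
pose e := fun r : 'I_(p ^ n) => (lev p n r, jdx p n r).
pose M : 'M[int]_(p ^ n) := \matrix_(r, k) cc p n (dl k) (lev p n r) (jdx p n r).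
exists e, M, (expected_divisors p n); split; last exact: perm_refl.
  split.
  - move=> r1 r2 [E1 E2]; apply: val_inj.
    exact: (jdx_inj _ _ _ _ pp (ltn_ord r1) (ltn_ord r2) E1 E2).
  - by move=> r; have [h1 _ h3] := lev_spec _ _ _ pp (ltn_ord r).
  - move=> i j hi hj; have [L J] := lev_inv _ _ _ _ pp hi hj.
    have hr : (p ^ n - p ^ i + j < p ^ n)%N.
      have := tot_le _ i pp; have : (p ^ i <= p ^ n)%N by apply: leq_pexp2l.
      have : (0 < p ^ i)%N by rewrite expn_gt0 p0.
      lia.
    by exists (Ordinal hr); rewrite /e /= L J.
  - move=> i k hi; rewrite /e /=.
    under eq_bigr => r /eqP Hr do rewrite mxE Hr.
    rewrite (sum_lev _ _ _ _ (fun j => (cc p n (dl k) i j)%:~R * z i ^+ j) pp hi).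
    by rewrite -(reduce p n (z i) (dl k) i pp hi (hz i)) sum_delta.
have Ed := exp_div_eq p n pp.
have dr : forall r : 'I_(p ^ n), (expected_divisors p n)`_r = (p ^ (n - lev p n r))%:Z.
  by move=> r; rewrite Ed nth_mkseq.
split; first by rewrite Ed size_mkseq.
split.
  rewrite Ed /mkseq sorted_map; apply: sub_sorted (iota_sorted 0 _) => r r' h.
  rewrite /relpre /= /dvdz /=; apply: dvdn_exp2l; have := lev_mono p n _ _ h; lia.
pose V : 'M[int]_(p ^ n) := \matrix_(k, r) dl (jdx p n r) (k %% p ^ lev p n r)%N.
pose B : 'M[int]_(p ^ n) := \matrix_(r, r')
   if (lev p n r <= lev p n r')%N then cc p n (dl (jdx p n r')) (lev p n r) (jdx p n r) else 0.
set D := \matrix_(i, j) _.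
have hV : \det V = 1.
  rewrite -det_tr det_trig.
    rewrite big1 // => r _; rewrite !mxE.
    have [h1 h2 h3] := lev_spec _ _ _ pp (ltn_ord r).
    set i := lev p n r in h1 h2 h3 *.
    have hT := tot_le _ i pp.
    have Eoff : (p ^ n - p ^ i = (p ^ (n - i)).-1 * p ^ i)%N.
      by rewrite -subn1 mulnBl mul1n -expnD subnK.
    have Er : (nat_of_ord r = (p ^ (n - i)).-1 * p ^ i + jdx p n r)%N by rewrite /jdx -/i -Eoff; lia.
    have -> : (r %% p ^ i = jdx p n r)%N by rewrite {1}Er modnMDl modn_small //; lia.
    by rewrite /dl eqxx.
  apply/forallP => r; apply/forallP => k; apply/implyP => hrk; rewrite !mxE.
  have [h1 h2 h3] := lev_spec _ _ _ pp (ltn_ord r).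
  set i := lev p n r in h1 h2 h3 *.
  have hT := tot_le _ i pp.
  rewrite /dl; case: ifP => [/eqP Hk | _]; last by rewrite eqxx.
  exfalso.
  set P := (p ^ i)%N in h2 h3 hT Hk.
  have P0 : (0 < P)%N by rewrite expn_gt0 p0.
  have Epn : (p ^ (n - i) * P = p ^ n)%N by rewrite -expnD subnK.
  have Hdk := divn_eq k P; rewrite Hk /jdx -/i -/P in Hdk.
  set q := (k %/ P)%N in Hdk.
  have hk := ltn_ord k.
  have h : (p ^ n < q.+1 * P)%N.
    rewrite mulSn; set Y := (q * P)%N in Hdk *; lia.
  rewrite -Epn ltn_pmul2r // ltnS in h.
  have : (p ^ (n - i) * P <= q * P)%N by rewrite leq_mul2r h orbT.
  rewrite Epn; set Y := (q * P)%N in Hdk *; lia.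
have hB : \det B = 1.
  rewrite det_trig.
    rewrite big1 // => r _; rewrite !mxE leqnn.
    have [h1 _ h3] := lev_spec _ _ _ pp (ltn_ord r).
    by rewrite (cc_delta _ _ _ _ _ _ pp hz h1 h3 h3) /dl eqxx.
  apply/forallP => r; apply/forallP => r'; apply/implyP => hrr; rewrite !mxE.
  case: leqP => // hl.
  have hl' := lev_mono p n _ _ (ltnW hrr).
  have El : lev p n r = lev p n r' by apply/eqP; rewrite eqn_leq hl hl'.
  have [h1 _ h3] := lev_spec _ _ _ pp (ltn_ord r).
  have [_ _ h3'] := lev_spec _ _ _ pp (ltn_ord r'); rewrite -El in h3'.
  rewrite (cc_delta _ _ _ _ _ _ pp hz h1 h3 h3') /dl; case: ifP => [/eqP Ej | _]; last by rewrite eqxx.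
  have := jdx_inj _ _ _ _ pp (ltn_ord r) (ltn_ord r') El Ej; lia.
have unit1 : forall A : 'M[int]_(p ^ n), \det A = 1 -> A \in unitmx.
  by move=> A hA; rewrite unitmxE hA unitr1.
have hMV : M *m V = B *m D.
  apply/matrixP => r r'; rewrite !mxE.
  under eq_bigr do rewrite !mxE.
  under [RHS]eq_bigr do rewrite !mxE.
  rewrite [X in _ = X](bigD1 r') //= [X in _ = _ + X]big1 ?addr0; last first.
    by move=> s hs; case: eqP => [E|_]; [by move: hs; rewrite (val_inj E) eqxx | rewrite mulr0n mulr0].
  rewrite eqxx mulr1n dr.
  have [ht _ hj] := lev_spec _ _ _ pp (ltn_ord r).
  have [hi' _ hj'] := lev_spec _ _ _ pp (ltn_ord r').
  set t := lev p n r in ht hj *; set j := jdx p n r in hj *.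
  set i' := lev p n r' in hi' hj' *; set j' := jdx p n r' in hj' *.
  have hj'p : (j' < p ^ i')%N by apply: leq_trans hj' (tot_le _ _ pp).
  have hj'n : (j' < p ^ n)%N by apply: leq_trans hj'p (leq_pexp2l p0 hi').
  pose y jj := \sum_(k < p ^ n) cc p n (dl k) t jj * dl j' (k %% p ^ i')%N.
  pose w jj := (if (t <= i')%N then cc p n (dl j') t jj else 0) * (p ^ (n - i'))%:Z.
  suff : forall jj, (jj < totient (p ^ t))%N -> y jj = w jj by move=> H; exact: H.
  apply: (@uniq_rep2 _ (z t) y w (hz t)).
  have Ek : forall k : 'I_(p ^ n),
      \sum_(jj < totient (p ^ t)) (cc p n (dl k) t jj * dl j' (k %% p ^ i')%N)%:~R * z t ^+ jj
      = (dl j' (k %% p ^ i')%N)%:~R * z t ^+ k.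
    move=> k.
    transitivity ((dl j' (k %% p ^ i')%N)%:~R *
                  \sum_(jj < totient (p ^ t)) (cc p n (dl k) t jj)%:~R * z t ^+ jj).
      by rewrite mulr_sumr; apply: eq_bigr => jj _; rewrite intrM; ring.
    by rewrite -(reduce p n (z t) (dl k) t pp ht (hz t)) sum_delta.
  rewrite /y; under eq_bigr do rewrite rmorph_sum mulr_suml.
  rewrite exchange_big /= (eq_bigr _ (fun k _ => Ek k)).
  rewrite (sum_V _ _ _ _ _ _ pp hz ht hi' hj'p) /w.
  case: leqP => hti.
    transitivity ((p ^ (n - i'))%:R *
                  \sum_(jj < totient (p ^ t)) (cc p n (dl j') t jj)%:~R * z t ^+ jj).
      by rewrite -(reduce p n (z t) (dl j') t pp ht (hz t)) sum_delta // mulrC.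
    by rewrite mulr_sumr; apply: eq_bigr => jj _; rewrite intrM; ring.
  by rewrite mulr0 big1 // => jj _; rewrite (_ : 0 * (p ^ (n - i'))%:Z = 0) ?mul0r // mul0r.
exists B; first exact: unit1.
exists (invmx V); first by rewrite unitmx_inv; exact: unit1.
by rewrite -hMV mulmxK //; exact: unit1.
Qed.

Theorem theorem5p14 (p n : nat) (z : nat -> algC) :
  prime p ->
  (forall i, (p ^ i).-primitive_root (z i)) ->
  (* unique representation in Z[zeta_{p^i}] w.r.t. the basis zeta^j, j < phi(p^i) *)
  (forall i (N : nat) (a : nat -> int), exists c : nat -> int,
      \sum_(k < N) (a k)%:~R * z i ^+ k
      = \sum_(j < totient (p ^ i)) (c j)%:~R * z i ^+ j) /\
  (forall i (c : nat -> int),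
      \sum_(j < totient (p ^ i)) (c j)%:~R * z i ^+ j = 0 ->
      forall j, (j < totient (p ^ i))%N -> c j = 0) /\
  (* image characterisation *)
  (forall x : nat -> nat -> int,
      in_wedderburn_image p n z x <->
      (forall l j, (1 <= l <= n)%N -> (j < totient (p ^ (n - l)))%N ->
         (x (n - l)%N j = wedd_rhs p n x l j %[mod (p ^ l)%:Z])%Z)) /\
  (* elementary divisors *)
  (exists (e : 'I_(p ^ n) -> nat * nat) (M : 'M[int]_(p ^ n)) (d : seq int),
      [/\ wedderburn_matrix p n z e M, smith_diagonal M d &
          perm_eq d (expected_divisors p n)]).
Proof.
move=> pp hz.
split.
  by move=> i N a; exact: part1_lem.
split.
  by move=> i c hs j hj; exact: (@uniq_rep _ _ c (hz i) hs j hj).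
split.
  exact: part3.
exact: part4.
Qed.
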